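(* Let $p,q$ be positive integers, $e>1$ an integer, $s$ a positive integer and $m$ a non-negative integer. If $$\tfrac12 G_{2^m s}\equiv 1\pmod{2^e}\quad\text{and}\quad \tfrac12 G_{2^m s}\not\equiv 1\pmod{2^{e+1}},$$ then for every positive integer $l$, $$\tfrac12 G_{2^{m+l}s}\equiv 1\pmod{2^{e+2l-1}},\quad \tfrac12 G_{2^{m+l}s}\equiv 1\pmod{2^{e+2l}},\quad \tfrac12 G_{2^{m+l}s}\not\equiv 1\pmod{2^{e+2l+1}}.$$
   Context: $A=pq+2$, $B=\sqrt{A^2-4}$, $G_n=\left(\frac{A+B}{2}\right)^n+\left(\frac{A-B}{2}\right)^n$ (an integer); congruences involving $\frac12 G_n$ require $\frac12G_n$ to be an integer. *)

(* Defs.v *)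
From Stdlib Require Import Reals ZArith Arith.
Open Scope R_scope.

Definition Aval (p q : nat) : R := INR (p * q + 2).
Definition Bval (p q : nat) : R := sqrt (Aval p q ^ 2 - 4).
Definition G (p q : nat) (n : nat) : R :=
  ((Aval p q + Bval p q) / 2) ^ n + ((Aval p q - Bval p q) / 2) ^ n.

(* x ≡ a (mod M) for a real x: x - a is an integer multiple of M.
   (In particular this forces x to be an integer when a is.) *)
Definition congR (x a : R) (M : nat) : Prop :=
  exists k : Z, x - a = IZR k * INR M.

(* Main.v *)
Require Import Defs.
From Stdlib Require Import Reals ZArith Arith Lia Lra Psatz.
Open Scope R_scope.

Lemma G_double p q n : G p q (2 * n) = G p q n ^ 2 - 2.
Proof.
  unfold G. set (a := Aval p q). set (b := Bval p q).
  assert (ha : 2 <= a).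
  { unfold a, Aval. rewrite plus_INR. pose proof (pos_INR (p*q)%nat). simpl. lra. }
  assert (hb : b * b = a ^ 2 - 4).
  { unfold b, Bval. fold a. apply sqrt_sqrt. nra. }
  assert (hab : ((a + b) / 2) * ((a - b) / 2) = 1) by nra.
  assert (hn : ((a + b) / 2) ^ n * ((a - b) / 2) ^ n = 1).
  { rewrite <- Rpow_mult_distr, hab. apply pow1. }
  rewrite (Nat.mul_comm 2 n), !pow_mult. nra.
Qed.

Lemma INR_pow2 N : INR (2 ^ N) = 2 ^ N.
Proof. rewrite pow_INR. reflexivity. Qed.

Lemma step x e k : (1 < e)%nat -> Z.odd k = true -> x - 1 = IZR k * 2 ^ e ->
  exists k', Z.odd k' = true /\ 2 * x ^ 2 - 1 - 1 = IZR k' * 2 ^ (e + 2).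
Proof.
  intros He Hk Hx.
  destruct e as [|[|e]]; try lia.
  exists (k + 2 ^ Z.of_nat (S e) * k * k)%Z. split.
  - rewrite Z.odd_add, Hk. rewrite Nat2Z.inj_succ, Z.pow_succ_r by lia.
    rewrite <- Z.mul_assoc, <- Z.mul_assoc, Z.odd_mul. reflexivity.
  - assert (x = 1 + IZR k * 2 ^ S (S e)) by lra. subst x.
    rewrite plus_IZR, !mult_IZR, <- pow_IZR. rewrite pow_add. simpl. ring.
Qed.

Lemma odd_of_not p q e n k : G p q n / 2 - 1 = IZR k * INR (2 ^ e) ->
  ~ congR (G p q n / 2) 1 (2 ^ (e + 1)) -> Z.odd k = true.
Proof.
  intros H Hn. destruct (Z.odd k) eqn:Ho; auto. exfalso. apply Hn.
  destruct (Zeven_ex k) as [j Hj].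
  { apply Zeven_bool_iff. rewrite <- Z.negb_odd, Ho. reflexivity. }
  exists j. rewrite H, Hj, !INR_pow2, mult_IZR, pow_add. simpl. ring.
Qed.

Lemma iter p q e s m k : (1 < e)%nat -> Z.odd k = true ->
  G p q (2 ^ m * s) / 2 - 1 = IZR k * 2 ^ e ->
  forall l, exists k', Z.odd k' = true /\
    G p q (2 ^ (m + l) * s) / 2 - 1 = IZR k' * 2 ^ (e + 2 * l).
Proof.
  intros He Hk Hx l. induction l as [|l IH].
  - exists k. rewrite Nat.add_0_r, Nat.mul_0_r, Nat.add_0_r. auto.
  - destruct IH as [k1 [Hk1 H1]].
    destruct (step (G p q (2 ^ (m + l) * s) / 2) (e + 2 * l) k1) as [k2 [Hk2 H2]];
      auto; try lia.
    exists k2. split; auto.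
    replace (2 ^ (m + S l) * s)%nat with (2 * (2 ^ (m + l) * s))%nat
      by (rewrite Nat.add_succ_r, Nat.pow_succ_r'; ring).
    replace (e + 2 * S l)%nat with (e + 2 * l + 2)%nat by lia.
    rewrite G_double, <- H2. field.
Qed.

Theorem lemma4 (p q e s m : nat) :
  (0 < p)%nat -> (0 < q)%nat -> (1 < e)%nat -> (0 < s)%nat ->
  congR (G p q (2 ^ m * s) / 2) 1 (2 ^ e) ->
  ~ congR (G p q (2 ^ m * s) / 2) 1 (2 ^ (e + 1)) ->
  forall l : nat, (0 < l)%nat ->
    congR (G p q (2 ^ (m + l) * s) / 2) 1 (2 ^ (e + 2 * l - 1)) /\
    congR (G p q (2 ^ (m + l) * s) / 2) 1 (2 ^ (e + 2 * l)) /\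
    ~ congR (G p q (2 ^ (m + l) * s) / 2) 1 (2 ^ (e + 2 * l + 1)).
Proof.
  intros Hp Hq He Hs [k Hk] Hn l Hl.
  pose proof (odd_of_not _ _ _ _ _ Hk Hn) as Ho.
  rewrite INR_pow2 in Hk.
  destruct (iter p q e s m k He Ho Hk l) as [k' [Ho' H']].
  split; [|split].
  - exists (2 * k')%Z. rewrite H', INR_pow2, mult_IZR.
    replace (e + 2 * l)%nat with (S (e + 2 * l - 1)) at 1 by lia. simpl. ring.
  - exists k'. rewrite H', INR_pow2. reflexivity.
  - intros [j Hj]. rewrite H', INR_pow2, (pow_add 2 (e + 2 * l) 1) in Hj.
    assert (IZR k' = IZR (2 * j)).
    { rewrite mult_IZR. apply (Rmult_eq_reg_r (2 ^ (e + 2 * l))); [| apply pow_nonzero; lra]. rewrite pow_1 in Hj. lra. }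
    apply eq_IZR in H. subst k'. rewrite Z.odd_mul in Ho'. discriminate.
Qed.
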